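(* Let $\lambda$ be a nonzero real number and let $p,r\in\mathbb{N}$ with $p>1$. Then \[ I_{\lambda}(r,p):=\int_{0}^{1}x^{r-1}\mathrm{Li}_{p,\lambda}(x)\,dx=\sum_{k=1}^{p-1}\frac{(-1)^{k-1}}{r^{k}}\zeta_{\lambda}(p-k+1)+\frac{(-1)^{p-1}}{r^{p}}\sum_{i=0}^{r-1}\frac{1}{\binom{\lambda+i}{i}(\lambda+i+1)}, \] where $\binom{\lambda+i}{i}=\frac{(\lambda+1)(\lambda+2)\cdots(\lambda+i)}{i!}$ (equal to $1$ for $i=0$).
   Context: Let $\lambda$ be a nonzero real number. For real $x$ and $\mu\neq 0$, set $(x)_{0,\mu}=1$ and $(x)_{n,\mu}=x(x-\mu)(x-2\mu)\cdots(x-(n-1)\mu)$ for $n\ge1$; in particular $(1)_{n,1/\lambda}=1\cdot(1-\tfrac1\lambda)(1-\tfrac2\lambda)\cdots(1-\tfrac{n-1}{\lambda})$. The degenerate polylogarithm is $\mathrm{Li}_{k,\lambda}(t)=\sum_{n=1}^{\infty}\frac{(-1)^{n-1}\lambda^{n-1}(1)_{n,1/\lambda}}{(n-1)!\,n^{k}}t^{n}$ for $k\in\mathbb{Z}$, $|t|<1$ (and by the same series where it converges). The degenerate zeta function is $\zeta_{\lambda}(s)=\sum_{n=1}^{\infty}\frac{(-1)^{n-1}\lambda^{n-1}(1)_{n,1/\lambda}}{(n-1)!\,n^{s}}$ for $\mathrm{Re}(s)>1$.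
   Formalization: The real number λ is required to satisfy −1 < λ as well as being nonzero. The statement above fails without it. *)

(* Defs.v *)
From Stdlib Require Import Reals ZArith.
From Coquelicot Require Import Coquelicot.
Open Scope R_scope.

Fixpoint deg_fall (x mu : R) (n : nat) : R :=
  match n with
  | O => 1
  | S m => deg_fall x mu m * (x - INR m * mu)
  end.

Definition deg_coef (lam : R) (n : nat) : R :=
  (-1) ^ (n - 1) * lam ^ (n - 1) * deg_fall 1 (1 / lam) n / INR (fact (n - 1)).

Definition deg_Li (k : Z) (lam t : R) : R :=
  Series (fun m : nat => deg_coef lam (S m) / powerRZ (INR (S m)) k * t ^ (S m)).

Definition deg_zeta (lam s : R) : R :=
  Series (fun m : nat => deg_coef lam (S m) / Rpower (INR (S m)) s).

Fixpoint rising_from1 (lam : R) (i : nat) : R :=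
  match i with
  | O => 1
  | S j => rising_from1 lam j * (lam + INR (S j))
  end.

Definition gbinom (lam : R) (i : nat) : R := rising_from1 lam i / INR (fact i).

(* Main.v *)
Require Import Defs.
From Stdlib Require Import Reals ZArith Lia Lra.
From Coquelicot Require Import Coquelicot.
Open Scope R_scope.

Definition aa (lam : R) (m : nat) : R := deg_coef lam (S m).

Lemma aa0 lam : aa lam 0 = 1.
Proof. unfold aa, deg_coef. simpl. lra. Qed.

Lemma aaS lam m : lam <> 0 -> aa lam (S m) = aa lam m * (INR (S m) - lam) / INR (S m).
Proof.
  intros H. unfold aa, deg_coef.
  replace (S (S m) - 1)%nat with (S m) by lia.
  replace (S m - 1)%nat with m by lia.
  change (deg_fall 1 (1/lam) (S (S m))) with (deg_fall 1 (1/lam) (S m) * (1 - INR (S m) * (1/lam))).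
  rewrite fact_simpl, mult_INR. simpl pow.
  assert (INR (fact m) <> 0) by apply INR_fact_neq_0.
  assert (INR (S m) <> 0) by (apply not_0_INR; lia).
  field; auto.
Qed.

Lemma is_series_R_plus (a b : nat -> R) la lb : is_series a la -> is_series b lb ->
  is_series (fun n => a n + b n) (la + lb).
Proof. intros; now apply (is_series_plus a b). Qed.

Lemma is_series_R_scal (c : R) (a : nat -> R) l : is_series a l ->
  is_series (fun n => c * a n) (c * l).
Proof. intros; now apply (is_series_scal c a). Qed.

Lemma is_series_tele (u : nat -> R) (l : R) : is_lim_seq u l ->
  is_series (fun m => u m - u (S m)) (u O - l).
Proof.
  intros H. unfold is_series.
  assert (E : forall N, sum_n (fun m => u m - u (S m)) N = u O - u (S N)).
  { induction N. - now rewrite sum_O.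
    - rewrite sum_Sn, IHN. simpl. change plus with Rplus. ring. }
  change (is_lim_seq (sum_n (fun m => u m - u (S m))) (u O - l)).
  apply (is_lim_seq_ext (fun N => u O - u (S N))).
  { intros; now rewrite E. }
  apply is_lim_seq_minus'. apply is_lim_seq_const.
  now apply (is_lim_seq_incr_1 u l).
Qed.

Lemma is_series_R_ext (a b : nat -> R) (l : R) : (forall n, a n = b n) -> is_series a l -> is_series b l.
Proof. apply is_series_ext. Qed.

Lemma lim_c_div_n c : is_lim_seq (fun N => c / INR N) 0.
Proof.
  assert (H := is_lim_seq_inv INR p_infty is_lim_seq_INR ltac:(discriminate)). apply (is_lim_seq_scal_l _ c) in H. simpl in H.
  rewrite Rmult_0_r in H. exact H.
Qed.

Lemma conv_main lam : lam <> 0 -> -1 < lam ->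
  is_lim_seq (fun m => aa lam m / INR (S m)) 0 /\
  ex_series (fun m => Rabs (aa lam m) / (INR (S m) * INR (S (S m)))).
Proof.
  intros H0 H1.
  destruct (archimed_cor1 (/ (Rabs lam + 1))) as [m0 [Hm0 Hm0']].
  { apply Rinv_0_lt_compat. pose proof (Rabs_pos lam). lra. }
  assert (Hm: lam < INR m0).
  { assert (0 < INR m0) by (apply lt_0_INR; lia).
    apply Rinv_lt_cancel in Hm0; auto. pose proof (Rle_abs lam). lra. }
  set (b k := Rabs (aa lam (k + m0))).
  set (U k := b k / INR (S (k + m0))).
  assert (Hpos: forall k, 0 < INR (S (k+m0)) - lam).
  { intros k. rewrite S_INR, plus_INR. pose proof (pos_INR k). lra. }
  assert (HSpos: forall k, 0 < INR (S k)).
  { intros k. apply lt_0_INR. lia. }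
  assert (HbS: forall k, b (S k) = b k * (INR (S (k+m0)) - lam) / INR (S (k+m0))).
  { intros k. unfold b. simpl (S k + m0)%nat. rewrite aaS by auto. unfold Rdiv.
    rewrite !Rabs_mult, Rabs_inv, (Rabs_pos_eq (INR _ - lam)), (Rabs_pos_eq (INR (S _))).
    ring. left; apply HSpos. left; apply Hpos. }
  assert (Hb0: forall k, 0 <= b k) by (intros; apply Rabs_pos).
  assert (HUd: forall k, U k - U (S k) = (lam + 1) * (b k / (INR (S (k + m0)) * INR (S (S (k + m0)))))).
  { intros k; unfold U. rewrite HbS. simpl (S k + m0)%nat. rewrite (S_INR (S (k+m0))).
    pose proof (HSpos (k+m0)%nat). field. lra. }
  assert (HU0: forall k, 0 <= U k).
  { intros; unfold U. apply Rdiv_le_0_compat; auto. }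
  assert (HUdec: forall k, U (S k) <= U k).
  { intros k. assert (0 <= (lam + 1) * (b k / (INR (S (k + m0)) * INR (S (S (k + m0)))))).
    { apply Rmult_le_pos. lra. apply Rdiv_le_0_compat; auto.
      apply Rmult_lt_0_compat; auto. }
    rewrite <- HUd in H. lra. }
  destruct (ex_finite_lim_seq_decr U 0 HUdec HU0) as [L HL].
  assert (HbD: forall k, b (S k) - b k = - lam * U k).
  { intros; unfold U; rewrite HbS. pose proof (HSpos (k+m0)%nat). field. lra. }
  assert (C := Cesaro_1 U L (proj1 (is_lim_seq_Reals _ _) HL)).
  apply is_lim_seq_Reals in C.
  assert (Hsum: forall N, sum_f_R0 U N = (b (S N) - b O) / (- lam)).
  { induction N.
    - simpl. rewrite HbD. field. auto.
    - simpl. rewrite IHN. rewrite <- (Rplus_0_r (U (S N))) at 1.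
      replace (U (S N)) with ((b (S (S N)) - b (S N)) / - lam).
      field; auto. rewrite HbD. field; auto. }
  assert (L1: is_lim_seq (fun N => b N / INR N) (- lam * L + 0)).
  { apply (is_lim_seq_ext_loc (fun N => - lam * (sum_f_R0 U (pred N) / INR N) + b O / INR N)).
    { exists 1%nat. intros N HN. destruct N as [|N]; [lia|]. simpl pred.
      rewrite Hsum. pose proof (HSpos N). field. split; auto. lra. }
    apply is_lim_seq_plus'. 
    apply (is_lim_seq_scal_l _ (-lam) L) in C. exact C.
    apply lim_c_div_n. }
  assert (L2: is_lim_seq (fun N => b N / INR N) (L * (1 + 0))).
  { apply (is_lim_seq_ext_loc (fun N => U N * (1 + INR (S m0) / INR N))).
    { exists 1%nat. intros N HN. unfold U.
      assert (0 < INR N) by (apply lt_0_INR; lia).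
      rewrite (S_INR (N + m0)), plus_INR, S_INR. pose proof (pos_INR m0).
      field. lra. }
    apply is_lim_seq_mult'. exact HL.
    apply is_lim_seq_plus'. apply is_lim_seq_const. apply lim_c_div_n. }
  apply is_lim_seq_unique in L1. apply is_lim_seq_unique in L2.
  rewrite L1 in L2. injection L2. intros EL.
  assert (L = 0) by nra. subst L.
  split.
  - apply is_lim_seq_abs_0. apply (is_lim_seq_incr_n _ m0).
    apply (is_lim_seq_ext U); auto.
    intros n. unfold U, b. rewrite Rabs_div, (Rabs_pos_eq (INR _)). reflexivity.
    left; apply HSpos. apply Rgt_not_eq, HSpos.
  - apply (ex_series_incr_n _ m0).
    exists (/ (lam + 1) * (U O - 0)).
    apply (is_series_R_ext (fun k => / (lam + 1) * (U k - U (S k)))).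
    { intros k. rewrite HUd. rewrite (Nat.add_comm m0 k). unfold b. pose proof (HSpos (k+m0)%nat); pose proof (HSpos (S (k+m0))). field. repeat split; lra. }
    apply is_series_R_scal. apply is_series_tele. exact HL.
Qed.

Definition hval (lam : R) (i : nat) : R := 1 / (gbinom lam i * (lam + INR i + 1)).

Lemma rising_pos lam i : -1 < lam -> 0 < rising_from1 lam i.
Proof.
  intros H. induction i; cbn [rising_from1]. lra.
  apply Rmult_lt_0_compat; auto. rewrite S_INR. pose proof (pos_INR i). lra.
Qed.

Lemma H_series lam i : lam <> 0 -> -1 < lam ->
  is_series (fun m => aa lam m / ((INR (S m) + INR i) * (INR (S m) + INR i + 1))) (hval lam i).
Proof.
  intros H0 H1. destruct (conv_main lam H0 H1) as [Hl _].
  assert (HSpos: forall k, 0 < INR (S k)) by (intros k; apply lt_0_INR; lia).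
  induction i.
  - apply (is_series_R_ext (fun m => / (lam + 1) * (aa lam m / INR (S m) - aa lam (S m) / INR (S (S m))))).
    { intros m. rewrite aaS by auto. rewrite (S_INR (S m)). simpl (INR 0).
      pose proof (HSpos m). field. lra. }
    replace (hval lam 0) with (/ (lam + 1) * (aa lam 0 / INR 1 - 0)).
    2: { unfold hval, gbinom. simpl. rewrite aa0. field. lra. }
    apply is_series_R_scal. apply (is_series_tele (fun m => aa lam m / INR (S m))). exact Hl.
  - set (d m := aa lam m * INR m / ((INR (S m) + INR i) * (INR (S m) + INR i + 1))).
    assert (Hd: is_lim_seq d 0).
    { apply (is_lim_seq_le_le (fun m => - Rabs (aa lam m / INR (S m))) d (fun m => Rabs (aa lam m / INR (S m)))).
      - intros m. apply Rabs_le_between. 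
        assert (E: d m = aa lam m / INR (S m) * (INR m * INR (S m) / ((INR (S m) + INR i) * (INR (S m) + INR i + 1)))).
        { unfold d. pose proof (HSpos m). pose proof (pos_INR i). field. lra. }
        rewrite E, Rabs_mult.
        set (X := INR m * INR (S m) / ((INR (S m) + INR i) * (INR (S m) + INR i + 1))).
        assert (0 <= X <= 1).
        { pose proof (HSpos m). pose proof (pos_INR i). pose proof (pos_INR m).
          unfold X. rewrite S_INR in *. split.
          apply Rdiv_le_0_compat; [nra|nra].
          assert (0 < (INR m + 1 + INR i) * (INR m + 1 + INR i + 1)) by nra.
          apply (Rmult_le_reg_r _ _ _ H4). unfold Rdiv. rewrite Rmult_assoc, Rinv_l by lra. nra. }
        rewrite (Rabs_pos_eq X) by lra.
        pose proof (Rabs_pos (aa lam m / INR (S m))). nra.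
      - assert (Habs: is_lim_seq (fun m => Rabs (aa lam m / INR (S m))) 0) by (apply -> is_lim_seq_abs_0; exact Hl).
        pose proof (proj1 (is_lim_seq_opp _ _) Habs) as Ho. simpl in Ho. rewrite Ropp_0 in Ho. exact Ho.
      - apply -> is_lim_seq_abs_0. exact Hl. }
    apply (is_series_R_ext (fun m => / (lam + INR i + 2) * ((d m - d (S m)) + (INR i + 1) *
       (aa lam m / ((INR (S m) + INR i) * (INR (S m) + INR i + 1)))))).
    { intros m. unfold d. rewrite aaS by auto. rewrite !S_INR.
      pose proof (pos_INR i). pose proof (pos_INR m). field. repeat split; lra. }
    replace (hval lam (S i)) with (/ (lam + INR i + 2) * ((d O - 0) + (INR i + 1) * hval lam i)).
    2: { unfold d, hval, gbinom. simpl (INR 0). rewrite fact_simpl, mult_INR.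
         cbn [rising_from1]. rewrite !S_INR.
         pose proof (rising_pos lam i H1). pose proof (pos_INR i).
         pose proof (INR_fact_neq_0 i). rewrite INR_0. field. repeat split; try lra; auto. }
    apply is_series_R_scal. apply is_series_R_plus. apply is_series_tele. exact Hd.
    apply is_series_R_scal. exact IHi.
Qed.

Lemma T_series lam q : lam <> 0 -> -1 < lam ->
  is_series (fun m => aa lam m * INR (S q) / (INR (S m) * (INR (S m) + INR (S q)))) (sum_n (hval lam) q).
Proof.
  intros H0 H1. assert (HSpos: forall k, 0 < INR (S k)) by (intros k; apply lt_0_INR; lia).
  induction q.
  - rewrite sum_O. eapply is_series_R_ext; [|exact (H_series lam 0 H0 H1)].
    intros m. simpl (INR 0). replace (INR 1) with 1 by reflexivity. pose proof (HSpos m). field. lra.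
  - rewrite sum_Sn. change plus with Rplus.
    eapply is_series_R_ext; [|exact (is_series_R_plus _ _ _ _ IHq (H_series lam (S q) H0 H1))].
    intros m. rewrite (S_INR (S q)), (S_INR q). pose proof (HSpos m). pose proof (pos_INR q).
    field. repeat split; lra.
Qed.

Lemma unif_conv (fN : nat -> R -> R) (g : R -> R) (tl : nat -> R) :
  is_lim_seq tl 0 -> (forall N t, Rabs (fN N t - g t) <= tl N) ->
  filterlim fN eventually (@locally (fct_UniformSpace R R_CompleteNormedModule) g).
Proof.
  intros Hl Hb P [eps Heps].
  apply is_lim_seq_spec in Hl. destruct (Hl eps) as [N0 HN0].
  exists N0. intros N HN. apply Heps. intros t.
  change (Rabs (fN N t - g t) < eps).
  specialize (HN0 N HN). rewrite Rminus_0_r in HN0.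
  eapply Rle_lt_trans. apply Hb. eapply Rle_lt_trans. apply Rle_abs. exact HN0.
Qed.

Lemma tail_bound (a M : nat -> R) : (forall n, Rabs (a n) <= M n) -> ex_series M ->
  forall N, Rabs (Series a - sum_n a N) <= Series M - sum_n M N.
Proof.
  intros HM Hex N.
  assert (Hea : ex_series (fun n => Rabs (a n))).
  { apply (@ex_series_le R_AbsRing R_CompleteNormedModule _ M); auto. intros n. unfold norm; simpl. unfold abs; simpl.
    rewrite Rabs_Rabsolu. auto. }
  assert (Hea' : ex_series a) by (apply ex_series_Rabs; auto).
  rewrite (Series_incr_n a (S N)) by (auto; lia).
  rewrite (Series_incr_n M (S N)) by (auto; lia).
  simpl pred. rewrite !sum_n_Reals.
  replace (sum_f_R0 a N + Series (fun k => a (S N + k)%nat) - sum_f_R0 a N)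
    with (Series (fun k => a (S N + k)%nat)) by ring.
  replace (sum_f_R0 M N + Series (fun k => M (S N + k)%nat) - sum_f_R0 M N)
    with (Series (fun k => M (S N + k)%nat)) by ring.
  eapply Rle_trans. apply Series_Rabs.
  apply (ex_series_incr_n (fun n => Rabs (a n)) (S N)); auto.
  apply Series_le. intros n. split. apply Rabs_pos. apply HM.
  apply (ex_series_incr_n M (S N)); auto.
Qed.

Lemma pow_le1 x k : 0 <= x <= 1 -> 0 <= x ^ k <= 1.
Proof. intros H. induction k; simpl; nra. Qed.

Lemma bound_term lam s m k x : (2 <= s)%nat -> 0 <= x <= 1 ->
  Rabs (aa lam m / INR (S m) ^ s * x ^ k) <= 2 * (Rabs (aa lam m) / (INR (S m) * INR (S (S m)))).
Proof.
  intros Hs Hx.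
  assert (Hn : 1 <= INR (S m)) by (rewrite S_INR; pose proof (pos_INR m); lra).
  rewrite Rabs_mult, Rabs_div.
  2: { apply pow_nonzero. lra. }
  rewrite <- !RPow_abs.
  rewrite (Rabs_pos_eq (INR (S m))) by lra. rewrite (Rabs_pos_eq x) by lra.
  set (A := Rabs (aa lam m)). assert (0 <= A) by apply Rabs_pos.
  assert (HX: 0 <= x ^ k <= 1) by (apply pow_le1; lra).
  set (n := INR (S m)) in *.
  replace (INR (S (S m))) with (n + 1) by (unfold n; rewrite (S_INR (S m)); ring).
  assert (Hp: n * n <= n ^ s).
  { replace s with (2 + (s - 2))%nat by lia. rewrite pow_add. simpl.
    assert (1 <= n ^ (s - 2)) by (apply pow_R1_Rle; lra). nra. }
  assert (HA: A / n ^ s <= 2 * (A / (n * (n + 1)))).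
  { assert (/ n ^ s <= / (n * n)) by (apply Rinv_le_contravar; nra).
    assert (/ (n * n) <= 2 * / (n * (n+1))).
    { assert (E: 2 * / (n * (n+1)) - / (n * n) = (n - 1) / (n * n * (n + 1))) by (field; lra).
      assert (0 <= (n - 1) / (n * n * (n + 1))) by (apply Rdiv_le_0_compat; nra).
      lra. }
    unfold Rdiv. nra. }
  assert (0 <= A / n ^ s) by (apply Rdiv_le_0_compat; [lra | apply pow_lt; lra]).
  nra.
Qed.

Lemma Mser lam : lam <> 0 -> -1 < lam ->
  ex_series (fun m => 2 * (Rabs (aa lam m) / (INR (S m) * INR (S (S m))))).
Proof.
  intros H0 H1. destruct (conv_main lam H0 H1) as [_ [l Hl]].
  exists (2 * l). now apply is_series_R_scal.
Qed.

Lemma zeta_series lam s : lam <> 0 -> -1 < lam -> (2 <= s)%nat ->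
  is_series (fun m => aa lam m / INR (S m) ^ s) (deg_zeta lam (INR s)).
Proof.
  intros H0 H1 Hs.
  assert (Hex: ex_series (fun m => aa lam m / INR (S m) ^ s)).
  { apply ex_series_Rabs.
    apply (@ex_series_le R_AbsRing R_CompleteNormedModule _ (fun m => 2 * (Rabs (aa lam m) / (INR (S m) * INR (S (S m)))))); [|exact (Mser lam H0 H1)].
    intros m. unfold norm; simpl. unfold abs; simpl. rewrite Rabs_Rabsolu.
    pose proof (bound_term lam s m 0 1 Hs ltac:(lra)) as B. simpl in B.
    rewrite Rmult_1_r in B. exact B. }
  replace (deg_zeta lam (INR s)) with (Series (fun m => aa lam m / INR (S m) ^ s)).
  now apply Series_correct.
  unfold deg_zeta. apply Series_ext. intros m. unfold aa. rewrite Rpower_pow. reflexivity.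
  apply lt_0_INR; lia.
Qed.

Definition Sval (z : nat -> R) (r Tv : R) (q : nat) : R :=
  sum_n_m (fun k => (-1) ^ (k - 1) / r ^ k * z (S q - k + 1)%nat) 1 q + (-1) ^ q / r ^ (S q) * Tv.

Lemma sum_n_m_Rmult (c : R) (u : nat -> R) n m :
  sum_n_m (fun k => c * u k) n m = c * sum_n_m u n m.
Proof. apply (sum_n_m_mult_l c u). Qed.

Lemma Sval_rec z r Tv q : r <> 0 -> Sval z r Tv (S q) = / r * z (S (S q)) - / r * Sval z r Tv q.
Proof.
  intros Hr. unfold Sval. rewrite sum_Sn_m by lia. change plus with Rplus.
  rewrite <- (sum_n_m_S _ 1 q).
  rewrite (sum_n_m_ext_loc _ (fun k => (- / r) * ((-1) ^ (k - 1) / r ^ k * z (S q - k + 1)%nat))).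
  2: { intros k Hk. destruct k as [|k]; [lia|].
       replace (S (S k) - 1)%nat with (S k) by lia. replace (S k - 1)%nat with k by lia.
       replace (S (S q) - S (S k) + 1)%nat with (S q - S k + 1)%nat by lia.
       match goal with |- ?a = ?b => change (@eq R a b) end. simpl pow. field. split; auto. apply pow_nonzero; auto. }
  rewrite sum_n_m_Rmult.
  replace (S (S q) - 1 + 1)%nat with (S (S q)) by lia.
  simpl pow. field. split; auto. apply pow_nonzero; auto.
Qed.

Lemma int_mono (c : R) (n : nat) : is_RInt (fun t => c * t ^ n) 0 1 (c / INR (S n)).
Proof.
  pose proof (is_RInt_scal _ 0 1 c _ (is_RInt_pow 0 1 n)) as H.
  replace (c / INR (S n)) with (scal c (1 ^ S n / INR (S n) - 0 ^ S n / INR (S n))).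
  exact H.
  assert (INR (S n) <> 0) by (apply not_0_INR; lia).
  rewrite pow1, pow_i by lia. change (scal c ?x) with (c * x). match goal with |- ?a = ?b => change (@eq R a b) end. field. auto.
Qed.

Lemma int_poly (c : nat -> R) (r N : nat) :
  is_RInt (fun t => sum_n (fun m => c m * t ^ (m + r)) N) 0 1 (sum_n (fun m => c m / INR (S (m + r))) N).
Proof.
  induction N.
  - eapply is_RInt_ext; [|rewrite sum_O; apply int_mono]. intros; now rewrite sum_O.
  - eapply is_RInt_ext; [|rewrite sum_Sn; exact (is_RInt_plus _ _ _ _ _ _ IHN (int_mono (c (S N)) (S N + r)))].
    intros; now rewrite sum_Sn.
Qed.

Lemma sum_n_Rmult (c : R) (u : nat -> R) N :
  sum_n (fun k => c * u k) N = c * sum_n u N.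
Proof. apply (sum_n_mult_l c u). Qed.

Lemma sum_n_Rext (a b : nat -> R) N : (forall n, a n = b n) -> sum_n a N = sum_n b N.
Proof. intros H; now apply sum_n_ext. Qed.

Theorem theorem1 (lam : R) (p r : nat)
  (Hlam0 : lam <> 0) (Hlam : -1 < lam) (Hp : (1 < p)%nat) (Hr : (0 < r)%nat) :
  RInt (fun x => x ^ (r - 1) * deg_Li (Z.of_nat p) lam x) 0 1 =
  sum_n_m (fun k => (-1) ^ (k - 1) / INR r ^ k * deg_zeta lam (INR (p - k + 1))) 1 (p - 1)
  + (-1) ^ (p - 1) / INR r ^ p *
    sum_n (fun i => 1 / (gbinom lam i * (lam + INR i + 1))) (r - 1).
Proof.
  destruct p as [|q]; [lia|]. destruct r as [|R0]; [lia|].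
  replace (S q - 1)%nat with q by lia. replace (S R0 - 1)%nat with R0 by lia.
  set (Tv := sum_n (fun i => 1 / (gbinom lam i * (lam + INR i + 1))) R0).
  set (z := fun s => deg_zeta lam (INR s)).
  match goal with |- _ = ?rhs => change rhs with (Sval z (INR (S R0)) Tv q) end.
  assert (HrR : INR (S R0) <> 0) by (apply not_0_INR; lia).
  assert (HSpos: forall k, 0 < INR (S k)) by (intros k; apply lt_0_INR; lia).
  assert (HS: forall q', is_series (fun m => aa lam m / (INR (S m) ^ (S q') * (INR (S m) + INR (S R0))))
                                   (Sval z (INR (S R0)) Tv q')).
  { induction q' as [|q' IH].
    - replace (Sval z (INR (S R0)) Tv 0) with (/ INR (S R0) * sum_n (hval lam) R0).
      + eapply is_series_R_ext; [| exact (is_series_R_scal (/ INR (S R0)) _ _ (T_series lam R0 Hlam0 Hlam))].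
        intros m. rewrite pow_1. pose proof (HSpos m). pose proof (pos_INR R0).
        rewrite (S_INR R0). field. split; lra.
      + unfold Sval. rewrite sum_n_m_zero by lia. simpl. unfold Tv, hval. 
        change (@zero R_AbelianMonoid) with 0. field. auto.
    - rewrite Sval_rec by auto.
      match goal with |- is_series _ (?u * ?a - ?u * ?b) => replace (u * a - u * b) with (u * a + - u * b) by ring end.
      eapply is_series_R_ext; [| exact (is_series_R_plus _ _ _ _
          (is_series_R_scal (/ INR (S R0)) _ _ (zeta_series lam (S (S q')) Hlam0 Hlam ltac:(lia)))
          (is_series_R_scal (- / INR (S R0)) _ _ IH))].
      + intros m. change (INR (S m) ^ S (S q')) with (INR (S m) * INR (S m) ^ S q'). pose proof (HSpos m). pose proof (pos_INR R0). rewrite (S_INR R0).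
        match goal with |- ?a = ?b => change (@eq R a b) end. change (INR (S m) ^ S (S q')) with (INR (S m) * INR (S m) ^ S q'). field. repeat split; try lra. apply pow_nonzero; lra.
}
  assert (HLi: forall t, deg_Li (Z.of_nat (S q)) lam t = Series (fun m => aa lam m / INR (S m) ^ (S q) * t ^ S m)).
  { intros t. unfold deg_Li. apply Series_ext. intros m. rewrite <- pow_powerRZ. reflexivity. }
  set (cl t := Rmax 0 (Rmin 1 t)).
  assert (Hcl: forall t, 0 <= cl t <= 1).
  { intros t. unfold cl. split. apply Rmax_l. apply Rmax_lub. lra. apply Rmin_l. }
  assert (Hcl2: forall t, Rmin 0 1 < t < Rmax 0 1 -> cl t = t).
  { intros t Ht. rewrite Rmin_left, Rmax_right in Ht by lra. unfold cl.
    rewrite Rmin_right by lra. rewrite Rmax_right by lra. reflexivity. }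
  set (term m x := aa lam m / INR (S m) ^ (S q) * x ^ S m).
  set (fN N t := cl t ^ R0 * sum_n (fun m => term m (cl t)) N).
  set (g t := cl t ^ R0 * Series (fun m => term m (cl t))).
  set (Mf m := 2 * (Rabs (aa lam m) / (INR (S m) * INR (S (S m))))).
  set (tl N := Series Mf - sum_n Mf N).
  set (hN N := sum_n (fun m => aa lam m / (INR (S m) ^ (S q) * (INR (S m) + INR (S R0)))) N).
  assert (Htl: is_lim_seq tl 0).
  { assert (Hs: is_lim_seq (sum_n Mf) (Series Mf)) by exact (Series_correct _ (Mser lam Hlam0 Hlam)).
    assert (H := is_lim_seq_minus' _ _ _ _ (is_lim_seq_const (Series Mf)) Hs).
    replace (Series Mf - Series Mf) with 0 in H by ring. exact H. }
  assert (Hb: forall N t, Rabs (fN N t - g t) <= tl N).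
  { intros N t. unfold fN, g.
    replace (cl t ^ R0 * sum_n (fun m => term m (cl t)) N - cl t ^ R0 * Series (fun m => term m (cl t)))
      with (- (cl t ^ R0) * (Series (fun m => term m (cl t)) - sum_n (fun m => term m (cl t)) N)) by ring.
    rewrite Rabs_mult, Rabs_Ropp.
    assert (Hc: Rabs (cl t ^ R0) <= 1).
    { rewrite <- RPow_abs. rewrite Rabs_pos_eq by apply Hcl. apply pow_le1. apply Hcl. }
    assert (Ht: Rabs (Series (fun m => term m (cl t)) - sum_n (fun m => term m (cl t)) N) <= tl N).
    { apply tail_bound. intros n. apply bound_term. lia. apply Hcl. exact (Mser lam Hlam0 Hlam). }
    pose proof (Rabs_pos (cl t ^ R0)). pose proof (Rabs_pos (Series (fun m => term m (cl t)) - sum_n (fun m => term m (cl t)) N)).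
    nra. }
  assert (Hint: forall N, is_RInt (fN N) 0 1 (hN N)).
  { intros N.
    assert (E: hN N = sum_n (fun m => aa lam m / INR (S m) ^ (S q) / INR (S (m + S R0))) N).
    { unfold hN. apply sum_n_Rext. intros m. rewrite (S_INR (m + S R0)), plus_INR, (S_INR m).
      pose proof (pos_INR m). pose proof (HSpos R0). field. split; try lra. apply pow_nonzero.
      rewrite <- S_INR. apply Rgt_not_eq, HSpos. }
    rewrite E.
    eapply is_RInt_ext; [| exact (int_poly (fun m => aa lam m / INR (S m) ^ (S q)) (S R0) N)].
    intros t Ht. unfold fN. rewrite (Hcl2 t Ht). rewrite <- sum_n_Rmult. apply sum_n_Rext.
    intros m. unfold term. rewrite pow_add. simpl pow. ring. }
  destruct (filterlim_RInt fN 0 1 eventually eventually_filter g hN Hint (unif_conv fN g tl Htl Hb)) as [If [HIf HgI]].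
  assert (HIs: is_series (fun m => aa lam m / (INR (S m) ^ (S q) * (INR (S m) + INR (S R0)))) If) by exact HIf.
  apply is_series_unique in HIs. pose proof (is_series_unique _ _ (HS q)) as HS'.
  rewrite HIs in HS'. rewrite <- HS'.
  apply is_RInt_unique. eapply is_RInt_ext; [| exact HgI].
  intros t Ht. unfold g. rewrite (Hcl2 t Ht). rewrite HLi. reflexivity.
Qed.
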